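(* Let $\mathcal{M}=\mathcal{M}_{3,3}$ and let $\partial\mathcal{M}$ denote its topological boundary relative to $\Delta_7$. Every $p\in\partial\mathcal{M}$ has a $2\times2$ slice of rank at most one, i.e. $d_{i,j}(p)=0$ for some $i\in\{1,2,3\}$, $j\in\{0,1\}$; and the Zariski closure of $\partial\mathcal{M}$ is the union of the six hypersurfaces $\{d_{i,j}=0\}$, $1\le i\le 3$, $0\le j\le1$.
   Context: A distribution of three binary random variables is a $2\times2\times2$ tensor $p=(p_{ijk})_{i,j,k\in\{0,1\}}$ with nonnegative entries summing to $1$; the set of these is $\Delta_7$. $\mathcal{M}_{3,3}$ is the set of $p\in\Delta_7$ that are a sum of three tensors $a\otimes b\otimes c$ (entries $a_ib_jc_k$) with $a,b,c\in\mathbb{R}^2_{\ge0}$. The slice determinants are $d_{1,0}=p_{000}p_{011}-p_{001}p_{010}$, $d_{1,1}=p_{100}p_{111}-p_{101}p_{110}$, $d_{2,0}=p_{000}p_{101}-p_{001}p_{100}$, $d_{2,1}=p_{010}p_{111}-p_{011}p_{110}$, $d_{3,0}=p_{000}p_{110}-p_{010}p_{100}$, $d_{3,1}=p_{001}p_{111}-p_{011}p_{101}$. *)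

(* Defs.v *)
From Stdlib Require Import Reals.
Open Scope R_scope.

(* A 2x2x2 real tensor p = (p_ijk), i,j,k in {0,1} (false = 0, true = 1). *)
Definition tensor := bool -> bool -> bool -> R.

Definition tsum (p : tensor) : R :=
  p false false false + p false false true + p false true false + p false true true +
  p true false false + p true false true + p true true false + p true true true.

Definition Delta7 (p : tensor) : Prop :=
  (forall i j k, 0 <= p i j k) /\ tsum p = 1.

Definition nonneg2 (a : bool -> R) : Prop := 0 <= a false /\ 0 <= a true.

Definition M33 (p : tensor) : Prop :=
  Delta7 p /\
  exists a1 b1 c1 a2 b2 c2 a3 b3 c3 : bool -> R,
    nonneg2 a1 /\ nonneg2 b1 /\ nonneg2 c1 /\
    nonneg2 a2 /\ nonneg2 b2 /\ nonneg2 c2 /\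
    nonneg2 a3 /\ nonneg2 b3 /\ nonneg2 c3 /\
    forall i j k, p i j k = a1 i * b1 j * c1 k + a2 i * b2 j * c2 k + a3 i * b3 j * c3 k.

(* Topological boundary of M_{3,3} relative to Delta_7 (Euclidean topology on R^8;
   we use the equivalent sup-distance on entries). *)
Definition bdM (p : tensor) : Prop :=
  Delta7 p /\
  forall eps, 0 < eps ->
    (exists q, M33 q /\ forall i j k, Rabs (q i j k - p i j k) < eps) /\
    (exists q, Delta7 q /\ ~ M33 q /\ forall i j k, Rabs (q i j k - p i j k) < eps).

Definition d10 (p : tensor) : R :=
  p false false false * p false true true - p false false true * p false true false.
Definition d11 (p : tensor) : R :=
  p true false false * p true true true - p true false true * p true true false.
Definition d20 (p : tensor) : R :=
  p false false false * p true false true - p false false true * p true false false.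
Definition d21 (p : tensor) : R :=
  p false true false * p true true true - p false true true * p true true false.
Definition d30 (p : tensor) : R :=
  p false false false * p true true false - p false true false * p true false false.
Definition d31 (p : tensor) : R :=
  p false false true * p true true true - p false true true * p true false true.

Inductive poly8 : Type :=
  | PVar : bool -> bool -> bool -> poly8
  | PConst : R -> poly8
  | PAdd : poly8 -> poly8 -> poly8
  | PMul : poly8 -> poly8 -> poly8.

Fixpoint peval (f : poly8) (x : tensor) : R :=
  match f with
  | PVar i j k => x i j k
  | PConst r => r
  | PAdd f g => peval f x + peval g x
  | PMul f g => peval f x * peval g x
  end.

Definition zariski_closure (S : tensor -> Prop) (x : tensor) : Prop :=
  forall f : poly8, (forall y, S y -> peval f y = 0) -> peval f x = 0.

(* Main.v *)
Require Import Defs.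
From Stdlib Require Import Reals Lra Psatz List Bool.
Open Scope R_scope.

Inductive ix := X1 | X2 | X3.
Definition nx (k : ix) : ix := match k with X1 => X2 | X2 => X3 | X3 => X1 end.
Definition mkv (x y z : R) (k : ix) : R := match k with X1 => x | X2 => y | X3 => z end.
Definition cross (u v : ix -> R) (k : ix) : R :=
  u (nx k) * v (nx (nx k)) - u (nx (nx k)) * v (nx k).
Definition Qf (w P : ix -> R) : R :=
  w X1 * P X2 * P X3 + w X2 * P X3 * P X1 + w X3 * P X1 * P X2.

Section Ident.
Variables A0 A1 B0 B1 C0 C1 : ix -> R.
Let al := cross A0 A1. Let be := cross B0 B1. Let ga := cross C0 C1.
Let pi k := al k * be k * ga k.

Lemma ident1 (P : ix -> R) (HP : P = A0 \/ P = A1) (k : ix) :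
  al k * Qf (fun j => be j * ga j) P =
  (pi k - pi (nx k) - pi (nx (nx k))) * P (nx k) * P (nx (nx k))
  - al (nx (nx k)) * be (nx k) * ga (nx k) * (P (nx (nx k)) * P (nx (nx k)))
  - al (nx k) * be (nx (nx k)) * ga (nx (nx k)) * (P (nx k) * P (nx k)).
Proof.
  unfold pi, al, be, ga, Qf, cross; destruct HP; subst; destruct k; simpl; ring.
Qed.

Lemma ident2 (P : ix -> R) (HP : P = B0 \/ P = B1) (k : ix) :
  be k * Qf (fun j => al j * ga j) P =
  (pi k - pi (nx k) - pi (nx (nx k))) * P (nx k) * P (nx (nx k))
  - be (nx (nx k)) * al (nx k) * ga (nx k) * (P (nx (nx k)) * P (nx (nx k)))
  - be (nx k) * al (nx (nx k)) * ga (nx (nx k)) * (P (nx k) * P (nx k)).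
Proof.
  unfold pi, al, be, ga, Qf, cross; destruct HP; subst; destruct k; simpl; ring.
Qed.
End Ident.

Lemma key_lemma (aK Q0 Q1 b c1 c2 X0 Y0 Z0 X1 Y1 Z1 sr : R) :
  aK <> 0 -> sr * sr = 1 -> 0 <= sr * c1 -> 0 <= sr * c2 ->
  0 <= X0 -> 0 <= Y0 -> 0 <= Z0 -> 0 <= X1 -> 0 <= Y1 -> 0 <= Z1 ->
  aK * Q0 = b * X0 - c1 * Y0 - c2 * Z0 ->
  aK * Q1 = b * X1 - c1 * Y1 - c2 * Z1 ->
  Q0 * Q1 < 0 -> 0 < sr * b.
Proof.
  intros HaK Hs H1 H2 HX0 HY0 HZ0 HX1 HY1 HZ1 E0 E1 HQ.
  assert (Hp : (sr * aK * Q0) * (sr * aK * Q1) < 0).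
  { replace ((sr * aK * Q0) * (sr * aK * Q1)) with ((sr*sr) * (aK * aK) * (Q0 * Q1)) by ring.
    rewrite Hs. assert (0 < aK * aK) by (apply Rsqr_pos_lt; auto). nra. }
  assert (F0 : sr * aK * Q0 <= (sr * b) * X0).
  { replace (sr * aK * Q0) with (sr * (aK * Q0)) by ring. rewrite E0.
    assert (0 <= (sr*c1) * Y0) by (apply Rmult_le_pos; auto).
    assert (0 <= (sr*c2) * Z0) by (apply Rmult_le_pos; auto). nra. }
  assert (F1 : sr * aK * Q1 <= (sr * b) * X1).
  { replace (sr * aK * Q1) with (sr * (aK * Q1)) by ring. rewrite E1.
    assert (0 <= (sr*c1) * Y1) by (apply Rmult_le_pos; auto).
    assert (0 <= (sr*c2) * Z1) by (apply Rmult_le_pos; auto). nra. }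
  destruct (Rle_or_lt (sr * b) 0) as [Hb|Hb]; [|exact Hb].
  exfalso.
  assert ((sr*b) * X0 <= 0) by nra.
  assert ((sr*b) * X1 <= 0) by nra.
  nra.
Qed.

Lemma Qf_nonneg w P : (forall k, 0 <= w k) -> (forall k, 0 <= P k) -> 0 <= Qf w P.
Proof.
  intros Hw HP. unfold Qf.
  pose proof (Hw X1); pose proof (Hw X2); pose proof (Hw X3);
  pose proof (HP X1); pose proof (HP X2); pose proof (HP X3).
  repeat apply Rplus_le_le_0_compat; repeat apply Rmult_le_pos; auto.
Qed.

Lemma Qf_opp w P : Qf (fun k => - w k) P = - Qf w P.
Proof. unfold Qf; ring. Qed.

Lemma safe_pos w P0 P1 : (forall k, 0 <= P0 k) -> (forall k, 0 <= P1 k) ->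
  Qf w P0 * Qf w P1 < 0 -> ~ (forall k, 0 <= w k).
Proof.
  intros H0 H1 HQ Hw.
  pose proof (Qf_nonneg w P0 Hw H0); pose proof (Qf_nonneg w P1 Hw H1). nra.
Qed.

Lemma safe_neg w P0 P1 : (forall k, 0 <= P0 k) -> (forall k, 0 <= P1 k) ->
  Qf w P0 * Qf w P1 < 0 -> ~ (forall k, w k <= 0).
Proof.
  intros H0 H1 HQ Hw.
  apply (safe_pos (fun k => - w k) P0 P1 H0 H1).
  - rewrite !Qf_opp. nra.
  - intro k; specialize (Hw k); lra.
Qed.

Lemma cross_orth u v : Qf (fun _ => 0) u = 0 /\
  cross u v X1 * u X1 + cross u v X2 * u X2 + cross u v X3 * u X3 = 0 /\
  cross u v X1 * v X1 + cross u v X2 * v X2 + cross u v X3 * v X3 = 0.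
Proof. unfold Qf, cross; simpl; repeat split; ring. Qed.

Lemma okvec_pos u v k : (forall j, 0 <= u j) -> (forall j, 0 <= v j) ->
  (forall j, 0 <= cross u v j) -> 0 < cross u v k -> 0 < cross u v (nx k) -> False.
Proof.
  intros Hu Hv Hc H1 H2.
  destruct (cross_orth u v) as [_ [E1 E2]].
  pose proof (Hu X1); pose proof (Hu X2); pose proof (Hu X3);
  pose proof (Hv X1); pose proof (Hv X2); pose proof (Hv X3);
  pose proof (Hc X1); pose proof (Hc X2); pose proof (Hc X3).
  assert (T1 : forall j, cross u v j * u j = 0).
  { assert (0 <= cross u v X1 * u X1) by (apply Rmult_le_pos; auto).
    assert (0 <= cross u v X2 * u X2) by (apply Rmult_le_pos; auto).
    assert (0 <= cross u v X3 * u X3) by (apply Rmult_le_pos; auto).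
    intro j; destruct j; lra. }
  assert (T2 : forall j, cross u v j * v j = 0).
  { assert (0 <= cross u v X1 * v X1) by (apply Rmult_le_pos; auto).
    assert (0 <= cross u v X2 * v X2) by (apply Rmult_le_pos; auto).
    assert (0 <= cross u v X3 * v X3) by (apply Rmult_le_pos; auto).
    intro j; destruct j; lra. }
  assert (Z1 : u k = 0) by (specialize (T1 k); apply Rmult_integral in T1; lra).
  assert (Z2 : v k = 0) by (specialize (T2 k); apply Rmult_integral in T2; lra).
  assert (Z3 : u (nx k) = 0) by (specialize (T1 (nx k)); apply Rmult_integral in T1; lra).
  assert (Z4 : v (nx k) = 0) by (specialize (T2 (nx k)); apply Rmult_integral in T2; lra).
  revert H1 H2 Z1 Z2 Z3 Z4. unfold cross. destruct k; simpl; intros;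
  rewrite ?Z1, ?Z2, ?Z3, ?Z4 in *; lra.
Qed.

Lemma okvec_neg u v k : (forall j, 0 <= u j) -> (forall j, 0 <= v j) ->
  (forall j, cross u v j <= 0) -> cross u v k < 0 -> cross u v (nx k) < 0 -> False.
Proof.
  intros Hu Hv Hc H1 H2.
  assert (E : forall j, cross v u j = - cross u v j) by (intro j; unfold cross; ring).
  apply (okvec_pos v u k Hv Hu).
  - intro j; rewrite E; specialize (Hc j); lra.
  - rewrite E; lra.
  - rewrite E; lra.
Qed.

Inductive sg := SN | SZ | SP.
Definition sgn (x : R) : sg :=
  match total_order_T x 0 with inleft (left _) => SN | inleft (right _) => SZ | inright _ => SP end.
Lemma sgn_spec x : (sgn x = SN -> x < 0) /\ (sgn x = SZ -> x = 0) /\ (sgn x = SP -> 0 < x).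
Proof.
  unfold sgn. destruct (total_order_T x 0) as [[H|H]|H]; repeat split; intro H'; try discriminate; auto; lra.
Qed.
Lemma sgn_N x : sgn x = SN -> x < 0. Proof. apply sgn_spec. Qed.
Lemma sgn_Z x : sgn x = SZ -> x = 0. Proof. apply sgn_spec. Qed.
Lemma sgn_P x : sgn x = SP -> 0 < x. Proof. apply sgn_spec. Qed.
Definition sneg (b : sg) : sg := match b with SN => SP | SZ => SZ | SP => SN end.
Definition smul (a b : sg) : sg := match a with SZ => SZ | SP => b | SN => sneg b end.
Lemma sgn_mul x y : sgn (x * y) = smul (sgn x) (sgn y).
Proof.
  pose proof (sgn_spec x) as [A1 [A2 A3]]; pose proof (sgn_spec y) as [B1 [B2 B3]];
  pose proof (sgn_spec (x*y)) as [C1 [C2 C3]].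
  destruct (sgn x); destruct (sgn y); destruct (sgn (x*y)); simpl; try reflexivity;
  repeat match goal with H : ?a = ?a -> _ |- _ => specialize (H eq_refl) end;
  exfalso; try subst; nra.
Qed.
Definition sgeq (a b : sg) : bool :=
  match a, b with SN,SN | SZ,SZ | SP,SP => true | _,_ => false end.
Lemma sgeq_eq a b : sgeq a b = true <-> a = b.
Proof. destruct a, b; simpl; split; congruence. Qed.

Definition ixs := X1 :: X2 :: X3 :: nil.
Definition ixeq (a b : ix) : bool :=
  match a, b with X1,X1 | X2,X2 | X3,X3 => true | _,_ => false end.
Definition third (a b : ix) : ix :=
  match a, b with
  | X1, X2 | X2, X1 => X3 | X1, X3 | X3, X1 => X2 | _, _ => X1 end.

Definition vec3 := (sg * sg * sg)%type.
Definition gt3 (v : vec3) (k : ix) : sg :=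
  match v, k with (a,_,_), X1 => a | (_,b,_), X2 => b | (_,_,c), X3 => c end.
Definition mixedb (f : ix -> sg) : bool :=
  existsb (fun k => sgeq (f k) SP) ixs && existsb (fun k => sgeq (f k) SN) ixs.
Definition nonN (s : sg) := match s with SN => false | _ => true end.
Definition twoOf (f : ix -> bool) : bool :=
  (f X1 && f X2) || (f X2 && f X3) || (f X3 && f X1).
Definition okvec (v : vec3) : bool :=
  negb (forallb (fun k => nonN (gt3 v k)) ixs && twoOf (fun k => sgeq (gt3 v k) SP)) &&
  negb (forallb (fun k => negb (sgeq (gt3 v k) SP)) ixs && twoOf (fun k => sgeq (gt3 v k) SN)).
Definition consb (a b c : vec3) : bool :=
  mixedb (fun k => smul (gt3 b k) (gt3 c k)) && mixedb (fun k => smul (gt3 a k) (gt3 c k)) &&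
  mixedb (fun k => smul (gt3 a k) (gt3 b k)) && okvec a && okvec b && okvec c.
Definition condb (a b c : vec3) (ka kb : ix) (s : sg) : bool :=
  let c1 := smul (gt3 a (nx (nx ka))) (smul (gt3 b (nx ka)) (gt3 c (nx ka))) in
  let c2 := smul (gt3 a (nx ka)) (smul (gt3 b (nx (nx ka))) (gt3 c (nx (nx ka)))) in
  let e1 := smul (gt3 b (nx (nx kb))) (smul (gt3 a (nx kb)) (gt3 c (nx kb))) in
  let e2 := smul (gt3 b (nx kb)) (smul (gt3 a (nx (nx kb))) (gt3 c (nx (nx kb)))) in
  let m := third ka kb in
  negb (ixeq ka kb) && negb (sgeq (gt3 a ka) SZ) && nonN (smul s c1) && nonN (smul s c2)
  && negb (sgeq (gt3 b kb) SZ) && nonN (smul s e1) && nonN (smul s e2)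
  && sgeq (smul s (smul (gt3 a m) (smul (gt3 b m) (gt3 c m)))) SP.
Definition conclb (a b c : vec3) : bool :=
  existsb (fun ka => existsb (fun kb => existsb (fun s => condb a b c ka kb s) (SP :: SN :: nil)) ixs) ixs.
Definition sgs := SN :: SZ :: SP :: nil.
Definition allv : list vec3 :=
  flat_map (fun x => flat_map (fun y => map (fun z => (x,y,z)) sgs) sgs) sgs.
Definition checkb : bool :=
  forallb (fun a => forallb (fun b => forallb (fun c => implb (consb a b c) (conclb a b c)) allv) allv) allv.
Lemma checkb_ok : checkb = true.
Proof. vm_compute. reflexivity. Qed.
Lemma in_allv v : In v allv.
Proof. destruct v as [[x y] z]; destruct x, y, z; simpl; tauto. Qed.
Lemma check_imp a b c : consb a b c = true -> conclb a b c = true.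
Proof.
  intro H. pose proof checkb_ok as C. unfold checkb in C.
  rewrite forallb_forall in C. specialize (C a (in_allv a)).
  rewrite forallb_forall in C. specialize (C b (in_allv b)).
  rewrite forallb_forall in C. specialize (C c (in_allv c)).
  rewrite H in C. exact C.
Qed.

Definition sv (u : ix -> R) : vec3 := (sgn (u X1), sgn (u X2), sgn (u X3)).
Lemma gt3_sv u k : gt3 (sv u) k = sgn (u k).
Proof. destruct k; reflexivity. Qed.

Lemma mixed_of (w : ix -> R) : ~ (forall k, 0 <= w k) -> ~ (forall k, w k <= 0) ->
  mixedb (fun k => sgn (w k)) = true.
Proof.
  intros H1 H2. unfold mixedb, ixs; simpl.
  pose proof (sgn_spec (w X1)) as [A1 [A2 A3]]; pose proof (sgn_spec (w X2)) as [B1 [B2 B3]];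
  pose proof (sgn_spec (w X3)) as [C1 [C2 C3]].
  destruct (sgn (w X1)); destruct (sgn (w X2)); destruct (sgn (w X3)); simpl; try reflexivity;
  repeat match goal with H : ?a = ?a -> _ |- _ => specialize (H eq_refl) end;
  exfalso; first [apply H1; intro k; destruct k; lra | apply H2; intro k; destruct k; lra].
Qed.

Lemma mixedb_ext f g : (forall k, f k = g k) -> mixedb f = mixedb g.
Proof. intro H; unfold mixedb, ixs; simpl; rewrite !H; reflexivity. Qed.

Lemma okvec_of u v : (forall j, 0 <= u j) -> (forall j, 0 <= v j) ->
  okvec (sv (cross u v)) = true.
Proof.
  intros Hu Hv. unfold okvec, sv, twoOf, ixs; simpl.
  pose proof (sgn_spec (cross u v X1)) as [A1 [A2 A3]];
  pose proof (sgn_spec (cross u v X2)) as [B1 [B2 B3]];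
  pose proof (sgn_spec (cross u v X3)) as [C1 [C2 C3]].
  destruct (sgn (cross u v X1)); destruct (sgn (cross u v X2)); destruct (sgn (cross u v X3));
  simpl; try reflexivity;
  repeat match goal with H : ?a = ?a -> _ |- _ => specialize (H eq_refl) end;
  exfalso;
  first [ apply (okvec_pos u v X1 Hu Hv); [intro j; destruct j; lra | simpl; lra | simpl; lra]
        | apply (okvec_pos u v X2 Hu Hv); [intro j; destruct j; lra | simpl; lra | simpl; lra]
        | apply (okvec_pos u v X3 Hu Hv); [intro j; destruct j; lra | simpl; lra | simpl; lra]
        | apply (okvec_neg u v X1 Hu Hv); [intro j; destruct j; lra | simpl; lra | simpl; lra]
        | apply (okvec_neg u v X2 Hu Hv); [intro j; destruct j; lra | simpl; lra | simpl; lra]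
        | apply (okvec_neg u v X3 Hu Hv); [intro j; destruct j; lra | simpl; lra | simpl; lra] ].
Qed.

Lemma nonN_sgn x : nonN (sgn x) = true -> 0 <= x.
Proof.
  pose proof (sgn_spec x) as [A1 [A2 A3]]. destruct (sgn x); simpl; intro H; try discriminate;
  repeat match goal with H : ?a = ?a -> _ |- _ => specialize (H eq_refl) end; lra.
Qed.

Definition pp (A0 A1 B0 B1 C0 C1 : ix -> R) k := cross A0 A1 k * cross B0 B1 k * cross C0 C1 k.

Lemma finish (A0 A1 B0 B1 C0 C1 : ix -> R) :
  (forall j, 0 <= A0 j) -> (forall j, 0 <= A1 j) -> (forall j, 0 <= B0 j) ->
  (forall j, 0 <= B1 j) -> (forall j, 0 <= C0 j) -> (forall j, 0 <= C1 j) ->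
  forall sr ka kb, sr * sr = 1 -> negb (ixeq ka kb) = true ->
  cross A0 A1 ka <> 0 -> cross B0 B1 kb <> 0 ->
  0 <= sr * (cross A0 A1 (nx (nx ka)) * (cross B0 B1 (nx ka) * cross C0 C1 (nx ka))) ->
  0 <= sr * (cross A0 A1 (nx ka) * (cross B0 B1 (nx (nx ka)) * cross C0 C1 (nx (nx ka)))) ->
  0 <= sr * (cross B0 B1 (nx (nx kb)) * (cross A0 A1 (nx kb) * cross C0 C1 (nx kb))) ->
  0 <= sr * (cross B0 B1 (nx kb) * (cross A0 A1 (nx (nx kb)) * cross C0 C1 (nx (nx kb)))) ->
  0 < sr * (cross A0 A1 (third ka kb) * (cross B0 B1 (third ka kb) * cross C0 C1 (third ka kb))) ->
  Qf (fun j => cross B0 B1 j * cross C0 C1 j) A0 * Qf (fun j => cross B0 B1 j * cross C0 C1 j) A1 < 0 ->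
  Qf (fun j => cross A0 A1 j * cross C0 C1 j) B0 * Qf (fun j => cross A0 A1 j * cross C0 C1 j) B1 < 0 ->
  False.
Proof.
  intros HA0 HA1 HB0 HB1 HC0 HC1 sr ka kb Hsr Hk Ha Hb c1 c2 e1 e2 Hm F1 F2.
  pose proof (ident1 A0 A1 B0 B1 C0 C1 A0 (or_introl eq_refl) ka) as I0.
  pose proof (ident1 A0 A1 B0 B1 C0 C1 A1 (or_intror eq_refl) ka) as I1.
  pose proof (ident2 A0 A1 B0 B1 C0 C1 B0 (or_introl eq_refl) kb) as J0.
  pose proof (ident2 A0 A1 B0 B1 C0 C1 B1 (or_intror eq_refl) kb) as J1.
  cbv beta in I0, I1, J0, J1.
  remember (pp A0 A1 B0 B1 C0 C1) as P eqn:HP.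
  assert (EP : forall k, cross A0 A1 k * cross B0 B1 k * cross C0 C1 k = P k) by (intro; subst; reflexivity).
  rewrite !EP in I0, I1, J0, J1.
  assert (NN : forall (U : ix -> R) a b, (forall j, 0 <= U j) -> 0 <= U a * U b)
    by (intros U a b HU; apply Rmult_le_pos; apply HU).
  assert (K1 : 0 < sr * (P ka - P (nx ka) - P (nx (nx ka)))).
  { apply (key_lemma (cross A0 A1 ka) (Qf (fun j => cross B0 B1 j * cross C0 C1 j) A0) (Qf (fun j => cross B0 B1 j * cross C0 C1 j) A1) (P ka - P (nx ka) - P (nx (nx ka)))
      (cross A0 A1 (nx (nx ka)) * cross B0 B1 (nx ka) * cross C0 C1 (nx ka))
      (cross A0 A1 (nx ka) * cross B0 B1 (nx (nx ka)) * cross C0 C1 (nx (nx ka)))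
      (A0 (nx ka) * A0 (nx (nx ka))) (A0 (nx (nx ka)) * A0 (nx (nx ka))) (A0 (nx ka) * A0 (nx ka))
      (A1 (nx ka) * A1 (nx (nx ka))) (A1 (nx (nx ka)) * A1 (nx (nx ka))) (A1 (nx ka) * A1 (nx ka)) sr Ha Hsr
      ltac:(rewrite !Rmult_assoc in *; exact c1) ltac:(rewrite !Rmult_assoc in *; exact c2)
      (NN _ _ _ HA0) (NN _ _ _ HA0) (NN _ _ _ HA0) (NN _ _ _ HA1) (NN _ _ _ HA1) (NN _ _ _ HA1)
      ltac:(rewrite I0; ring) ltac:(rewrite I1; ring) F1). }
  assert (K2 : 0 < sr * (P kb - P (nx kb) - P (nx (nx kb)))).
  { apply (key_lemma (cross B0 B1 kb) (Qf (fun j => cross A0 A1 j * cross C0 C1 j) B0) (Qf (fun j => cross A0 A1 j * cross C0 C1 j) B1) (P kb - P (nx kb) - P (nx (nx kb)))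
      (cross B0 B1 (nx (nx kb)) * cross A0 A1 (nx kb) * cross C0 C1 (nx kb))
      (cross B0 B1 (nx kb) * cross A0 A1 (nx (nx kb)) * cross C0 C1 (nx (nx kb)))
      (B0 (nx kb) * B0 (nx (nx kb))) (B0 (nx (nx kb)) * B0 (nx (nx kb))) (B0 (nx kb) * B0 (nx kb))
      (B1 (nx kb) * B1 (nx (nx kb))) (B1 (nx (nx kb)) * B1 (nx (nx kb))) (B1 (nx kb) * B1 (nx kb)) sr Hb Hsr
      ltac:(rewrite !Rmult_assoc in *; exact e1) ltac:(rewrite !Rmult_assoc in *; exact e2)
      (NN _ _ _ HB0) (NN _ _ _ HB0) (NN _ _ _ HB0) (NN _ _ _ HB1) (NN _ _ _ HB1) (NN _ _ _ HB1)
      ltac:(rewrite J0; ring) ltac:(rewrite J1; ring) F2). }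
  replace (sr * (cross A0 A1 (third ka kb) * (cross B0 B1 (third ka kb) * cross C0 C1 (third ka kb))))
    with (sr * P (third ka kb)) in Hm by (rewrite <- EP; ring).
  clear HP EP.
  destruct ka, kb; simpl in Hk, K1, K2, Hm; try discriminate; nra.
Qed.

Lemma sneg_sgn x : sneg (sgn x) = sgn (- x).
Proof.
  pose proof (sgn_spec x) as [A1 [A2 A3]]; pose proof (sgn_spec (-x)) as [B1 [B2 B3]].
  destruct (sgn x); destruct (sgn (-x)); simpl; try reflexivity;
  repeat match goal with H : ?a = ?a -> _ |- _ => specialize (H eq_refl) end; exfalso; lra.
Qed.
Lemma hN_nn x : nonN (smul SN (sgn x)) = true -> 0 <= -1 * x.
Proof. simpl. rewrite sneg_sgn. intro H. apply nonN_sgn in H. lra. Qed.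
Lemma hP_nn x : nonN (smul SP (sgn x)) = true -> 0 <= 1 * x.
Proof. simpl. intro H. apply nonN_sgn in H. lra. Qed.
Lemma hN_pos x : sgeq (smul SN (sgn x)) SP = true -> 0 < -1 * x.
Proof. simpl. rewrite sneg_sgn. intro H. apply sgeq_eq, sgn_P in H. lra. Qed.
Lemma hP_pos x : sgeq (smul SP (sgn x)) SP = true -> 0 < 1 * x.
Proof. simpl. intro H. apply sgeq_eq, sgn_P in H. lra. Qed.
Lemma h_nz x : negb (sgeq (sgn x) SZ) = true -> x <> 0.
Proof.
  intros H E. subst. pose proof (sgn_spec 0) as [A1 [A2 A3]]. destruct (sgn 0); simpl in H;
  try discriminate; [specialize (A1 eq_refl)|specialize (A3 eq_refl)]; lra.
Qed.

Lemma obs_core (A0 A1 B0 B1 C0 C1 : ix -> R) :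
  (forall j, 0 <= A0 j) -> (forall j, 0 <= A1 j) -> (forall j, 0 <= B0 j) ->
  (forall j, 0 <= B1 j) -> (forall j, 0 <= C0 j) -> (forall j, 0 <= C1 j) ->
  Qf (fun j => cross B0 B1 j * cross C0 C1 j) A0 * Qf (fun j => cross B0 B1 j * cross C0 C1 j) A1 < 0 ->
  Qf (fun j => cross A0 A1 j * cross C0 C1 j) B0 * Qf (fun j => cross A0 A1 j * cross C0 C1 j) B1 < 0 ->
  Qf (fun j => cross A0 A1 j * cross B0 B1 j) C0 * Qf (fun j => cross A0 A1 j * cross B0 B1 j) C1 < 0 ->
  False.
Proof.
  intros HA0 HA1 HB0 HB1 HC0 HC1 F1 F2 F3.
  set (al := cross A0 A1) in *. set (be := cross B0 B1) in *. set (ga := cross C0 C1) in *.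
  assert (Cons : consb (sv al) (sv be) (sv ga) = true).
  { unfold consb.
    rewrite (mixedb_ext _ (fun k => sgn (be k * ga k))) by (intro k; rewrite !gt3_sv, sgn_mul; reflexivity).
    rewrite (mixedb_ext (fun k => smul (gt3 (sv al) k) (gt3 (sv ga) k)) (fun k => sgn (al k * ga k)))
      by (intro k; rewrite !gt3_sv, sgn_mul; reflexivity).
    rewrite (mixedb_ext (fun k => smul (gt3 (sv al) k) (gt3 (sv be) k)) (fun k => sgn (al k * be k)))
      by (intro k; rewrite !gt3_sv, sgn_mul; reflexivity).
    rewrite !mixed_of; try (unfold al, be, ga; rewrite !okvec_of by assumption; reflexivity).
    all: first [ exact (safe_pos _ _ _ HA0 HA1 F1) | exact (safe_neg _ _ _ HA0 HA1 F1)
               | exact (safe_pos _ _ _ HB0 HB1 F2) | exact (safe_neg _ _ _ HB0 HB1 F2)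
               | exact (safe_pos _ _ _ HC0 HC1 F3) | exact (safe_neg _ _ _ HC0 HC1 F3) ]. }
  apply check_imp in Cons. unfold conclb in Cons.
  apply existsb_exists in Cons as [ka [_ Cons]].
  apply existsb_exists in Cons as [kb [_ Cons]].
  apply existsb_exists in Cons as [s [Hs Cons]].
  unfold condb in Cons. rewrite !gt3_sv, <- !sgn_mul in Cons.
  repeat match goal with H : _ && _ = true |- _ => apply andb_prop in H; destruct H end.
  destruct s.
  - apply (finish A0 A1 B0 B1 C0 C1 HA0 HA1 HB0 HB1 HC0 HC1 (-1) ka kb); try assumption;
    try ring; try (apply h_nz; assumption);
    first [apply hN_nn; assumption | apply hN_pos; assumption].
  - exfalso. repeat match goal with H : sgeq (smul SZ _) _ = true |- _ => simpl in H; discriminate H end.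
  - apply (finish A0 A1 B0 B1 C0 C1 HA0 HA1 HB0 HB1 HC0 HC1 1 ka kb); try assumption;
    try ring; try (apply h_nz; assumption);
    first [apply hP_nn; assumption | apply hP_pos; assumption].
Qed.

Lemma Obs (p : tensor) : M33 p ->
  ~ (d10 p * d11 p < 0 /\ d20 p * d21 p < 0 /\ d30 p * d31 p < 0).
Proof.
  intros [_ [a1 [b1 [c1 [a2 [b2 [c2 [a3 [b3 [c3 [Ha1 [Hb1 [Hc1 [Ha2 [Hb2 [Hc2 [Ha3 [Hb3 [Hc3 E]]]]]]]]]]]]]]]]]]] [F1 [F2 F3]].
  set (A0 := mkv (a1 false) (a2 false) (a3 false)).
  set (A1 := mkv (a1 true) (a2 true) (a3 true)).
  set (B0 := mkv (b1 false) (b2 false) (b3 false)).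
  set (B1 := mkv (b1 true) (b2 true) (b3 true)).
  set (C0 := mkv (c1 false) (c2 false) (c3 false)).
  set (C1 := mkv (c1 true) (c2 true) (c3 true)).
  unfold nonneg2 in *.
  apply (obs_core A0 A1 B0 B1 C0 C1);
    try (intro j; destruct j; simpl; tauto).
  - replace (Qf (fun j => cross B0 B1 j * cross C0 C1 j) A0) with (d10 p)
      by (unfold d10, Qf, cross, A0, B0, B1, C0, C1, mkv; simpl; rewrite !E; ring).
    replace (Qf (fun j => cross B0 B1 j * cross C0 C1 j) A1) with (d11 p)
      by (unfold d11, Qf, cross, A1, B0, B1, C0, C1, mkv; simpl; rewrite !E; ring).
    exact F1.
  - replace (Qf (fun j => cross A0 A1 j * cross C0 C1 j) B0) with (d20 p)
      by (unfold d20, Qf, cross, A0, A1, B0, C0, C1, mkv; simpl; rewrite !E; ring).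
    replace (Qf (fun j => cross A0 A1 j * cross C0 C1 j) B1) with (d21 p)
      by (unfold d21, Qf, cross, A0, A1, B1, C0, C1, mkv; simpl; rewrite !E; ring).
    exact F2.
  - replace (Qf (fun j => cross A0 A1 j * cross B0 B1 j) C0) with (d30 p)
      by (unfold d30, Qf, cross, A0, A1, B0, B1, C0, mkv; simpl; rewrite !E; ring).
    replace (Qf (fun j => cross A0 A1 j * cross B0 B1 j) C1) with (d31 p)
      by (unfold d31, Qf, cross, A0, A1, B0, B1, C1, mkv; simpl; rewrite !E; ring).
    exact F3.
Qed.

Definition sw12 (p : tensor) : tensor := fun i j k => p j i k.
Definition sw13 (p : tensor) : tensor := fun i j k => p k j i.
Definition fl1 (p : tensor) : tensor := fun i j k => p (negb i) j k.
Definition fl3 (p : tensor) : tensor := fun i j k => p i j (negb k).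

Lemma Delta7_ext p q : (forall i j k, p i j k = q i j k) -> Delta7 p -> Delta7 q.
Proof. intros E [H1 H2]. split. intros i j k; rewrite <- E; auto. unfold tsum in *; rewrite <- !E; exact H2. Qed.

Lemma M33_ext p q : (forall i j k, p i j k = q i j k) -> M33 p -> M33 q.
Proof.
  intros E [HD [a1 [b1 [c1 [a2 [b2 [c2 [a3 [b3 [c3 [Ha1 [Hb1 [Hc1 [Ha2 [Hb2 [Hc2 [Ha3 [Hb3 [Hc3 F]]]]]]]]]]]]]]]]]]].
  split; [exact (Delta7_ext p q E HD)|].
  exists a1, b1, c1, a2, b2, c2, a3, b3, c3. do 9 (split; [assumption|]). intros i j k; rewrite <- E; auto.
Qed.

Ltac solve_tsum := unfold tsum in *; simpl; lra.

Lemma Delta7_sw12 p : Delta7 p -> Delta7 (sw12 p).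
Proof. intros [H1 H2]; split; [intros; apply H1 | unfold sw12; solve_tsum]. Qed.
Lemma Delta7_sw13 p : Delta7 p -> Delta7 (sw13 p).
Proof. intros [H1 H2]; split; [intros; apply H1 | unfold sw13; solve_tsum]. Qed.
Lemma Delta7_fl1 p : Delta7 p -> Delta7 (fl1 p).
Proof. intros [H1 H2]; split; [intros; apply H1 | unfold fl1; solve_tsum]. Qed.
Lemma Delta7_fl3 p : Delta7 p -> Delta7 (fl3 p).
Proof. intros [H1 H2]; split; [intros; apply H1 | unfold fl3; solve_tsum]. Qed.

Lemma M33_sw12 p : M33 p -> M33 (sw12 p).
Proof.
  intros [HD [a1 [b1 [c1 [a2 [b2 [c2 [a3 [b3 [c3 [Ha1 [Hb1 [Hc1 [Ha2 [Hb2 [Hc2 [Ha3 [Hb3 [Hc3 F]]]]]]]]]]]]]]]]]]].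
  split; [apply Delta7_sw12; auto|].
  exists b1, a1, c1, b2, a2, c2, b3, a3, c3. do 9 (split; [assumption|]).
  intros i j k; unfold sw12; rewrite F; ring.
Qed.
Lemma M33_sw13 p : M33 p -> M33 (sw13 p).
Proof.
  intros [HD [a1 [b1 [c1 [a2 [b2 [c2 [a3 [b3 [c3 [Ha1 [Hb1 [Hc1 [Ha2 [Hb2 [Hc2 [Ha3 [Hb3 [Hc3 F]]]]]]]]]]]]]]]]]]].
  split; [apply Delta7_sw13; auto|].
  exists c1, b1, a1, c2, b2, a2, c3, b3, a3. do 9 (split; [assumption|]).
  intros i j k; unfold sw13; rewrite F; ring.
Qed.
Lemma M33_fl1 p : M33 p -> M33 (fl1 p).
Proof.
  intros [HD [a1 [b1 [c1 [a2 [b2 [c2 [a3 [b3 [c3 [Ha1 [Hb1 [Hc1 [Ha2 [Hb2 [Hc2 [Ha3 [Hb3 [Hc3 F]]]]]]]]]]]]]]]]]]].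
  split; [apply Delta7_fl1; auto|].
  exists (fun i => a1 (negb i)), b1, c1, (fun i => a2 (negb i)), b2, c2, (fun i => a3 (negb i)), b3, c3.
  unfold nonneg2 in *; simpl.
  repeat split; try tauto.
  intros i j k; unfold fl1; rewrite F; ring.
Qed.
Lemma M33_fl3 p : M33 p -> M33 (fl3 p).
Proof.
  intros [HD [a1 [b1 [c1 [a2 [b2 [c2 [a3 [b3 [c3 [Ha1 [Hb1 [Hc1 [Ha2 [Hb2 [Hc2 [Ha3 [Hb3 [Hc3 F]]]]]]]]]]]]]]]]]]].
  split; [apply Delta7_fl3; auto|].
  exists a1, b1, (fun i => c1 (negb i)), a2, b2, (fun i => c2 (negb i)), a3, b3, (fun i => c3 (negb i)).
  unfold nonneg2 in *; simpl.
  repeat split; try tauto.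
  intros i j k; unfold fl3; rewrite F; ring.
Qed.

Lemma cons_pos p : Delta7 p -> 0 < d10 p -> 0 < d11 p -> M33 p.
Proof.
  intros [HN HS] H0 H1. split; [split; auto|].
  unfold d10, d11 in *.
  assert (P011 : 0 < p false true true).
  { pose proof (HN false false true); pose proof (HN false true false); pose proof (HN false false false);
    pose proof (HN false true true). destruct (Rle_lt_or_eq_dec 0 (p false true true)); auto; try nra. }
  assert (P111 : 0 < p true true true).
  { pose proof (HN true false true); pose proof (HN true true false); pose proof (HN true false false);
    pose proof (HN true true true). destruct (Rle_lt_or_eq_dec 0 (p true true true)); auto; try nra. }
  set (t0 := (p false false false * p false true true - p false false true * p false true false) / p false true true).
  set (t1 := (p true false false * p true true true - p true false true * p true true false) / p true true true).
  exists (fun i : bool => if i then 0 else 1), (fun j : bool => if j then p false true true else p false false true),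
         (fun k : bool => if k then 1 else p false true false / p false true true),
         (fun i : bool => if i then 1 else 0), (fun j : bool => if j then p true true true else p true false true),
         (fun k : bool => if k then 1 else p true true false / p true true true),
         (fun i : bool => if i then t1 else t0), (fun j : bool => if j then 0 else 1), (fun k : bool => if k then 0 else 1).
  unfold nonneg2; simpl.
  assert (0 <= t0) by (unfold t0; apply Rlt_le, Rdiv_lt_0_compat; lra).
  assert (0 <= t1) by (unfold t1; apply Rlt_le, Rdiv_lt_0_compat; lra).
  assert (0 <= p false true false / p false true true) by (unfold Rdiv; apply Rmult_le_pos; [apply HN | apply Rlt_le, Rinv_0_lt_compat; auto]).
  assert (0 <= p true true false / p true true true) by (unfold Rdiv; apply Rmult_le_pos; [apply HN | apply Rlt_le, Rinv_0_lt_compat; auto]).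
  repeat split; try lra; try apply HN.
  intros i j k; destruct i, j, k; simpl; unfold t0, t1; field; lra.
Qed.

Lemma cons1 p : Delta7 p -> 0 < d10 p * d11 p -> M33 p.
Proof.
  intros HD H.
  destruct (Rlt_or_le 0 (d10 p)) as [Ha|Ha].
  - apply cons_pos; auto. nra.
  - assert (d10 p < 0) by (destruct Ha; auto; subst; nra).
    assert (d11 p < 0) by nra.
    apply (M33_ext (fl3 (fl3 p))); [intros i j k; unfold fl3; rewrite negb_involutive; reflexivity|].
    apply M33_fl3, cons_pos; [apply Delta7_fl3; auto| |]; unfold d10, d11, fl3 in *; simpl; lra.
Qed.

Lemma cons2 p : Delta7 p -> 0 < d20 p * d21 p -> M33 p.
Proof.
  intros HD H.
  apply (M33_ext (sw12 (sw12 p))); [intros; reflexivity|].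
  apply M33_sw12, cons1; [apply Delta7_sw12; auto|]. unfold d10, d11, d20, d21, sw12 in *; simpl; lra.
Qed.

Lemma cons3 p : Delta7 p -> 0 < d30 p * d31 p -> M33 p.
Proof.
  intros HD H.
  apply (M33_ext (sw13 (sw13 p))); [intros; reflexivity|].
  apply M33_sw13, cons1; [apply Delta7_sw13; auto|]. unfold d10, d11, d30, d31, sw13 in *; simpl; lra.
Qed.

Definition close (e : R) (q p : tensor) : Prop := forall i j k, Rabs (q i j k - p i j k) < e.

Lemma peval_cont f p : forall e, 0 < e -> exists eta, 0 < eta /\
  forall q, close eta q p -> Rabs (peval f q - peval f p) < e.
Proof.
  induction f as [i j k | c | f IHf g IHg | f IHf g IHg]; intros e He; simpl.
  - exists e; split; [exact He| intros q Hq; apply Hq].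
  - exists 1; split; [lra|]. intros; rewrite Rminus_diag, Rabs_R0; auto.
  - destruct (IHf (e/2) ltac:(lra)) as [e1 [He1 H1]]. destruct (IHg (e/2) ltac:(lra)) as [e2 [He2 H2]].
    exists (Rmin e1 e2); split; [apply Rmin_pos; auto|]. intros q Hq.
    assert (close e1 q p) by (intros i j k; specialize (Hq i j k); pose proof (Rmin_l e1 e2); lra).
    assert (close e2 q p) by (intros i j k; specialize (Hq i j k); pose proof (Rmin_r e1 e2); lra).
    specialize (H1 q H); specialize (H2 q H0).
    replace (peval f q + peval g q - (peval f p + peval g p)) with
      ((peval f q - peval f p) + (peval g q - peval g p)) by ring.
    eapply Rle_lt_trans; [apply Rabs_triang|]. lra.
  - set (Fp := peval f p). set (Gp := peval g p).
    assert (HF : 0 <= Rabs Fp) by apply Rabs_pos. assert (HG : 0 <= Rabs Gp) by apply Rabs_pos.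
    set (ef := e / (2 * (Rabs Gp + 1))). set (eg := Rmin 1 (e / (2 * (Rabs Fp + 1)))).
    assert (Hef : 0 < ef) by (unfold ef; apply Rdiv_lt_0_compat; lra).
    assert (Heg : 0 < eg) by (unfold eg; apply Rmin_pos; [lra| apply Rdiv_lt_0_compat; lra]).
    destruct (IHf ef Hef) as [e1 [He1 H1]]. destruct (IHg eg Heg) as [e2 [He2 H2]].
    exists (Rmin e1 e2); split; [apply Rmin_pos; auto|]. intros q Hq.
    assert (close e1 q p) by (intros i j k; specialize (Hq i j k); pose proof (Rmin_l e1 e2); lra).
    assert (close e2 q p) by (intros i j k; specialize (Hq i j k); pose proof (Rmin_r e1 e2); lra).
    specialize (H1 q H); specialize (H2 q H0). fold Fp Gp in H1, H2 |- *.
    set (Fq := peval f q) in *. set (Gq := peval g q) in *.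
    replace (Fq * Gq - Fp * Gp) with ((Fq - Fp) * Gq + Fp * (Gq - Gp)) by ring.
    eapply Rle_lt_trans; [apply Rabs_triang|]. rewrite !Rabs_mult.
    assert (Heg1 : eg <= 1) by apply Rmin_l.
    assert (Heg2 : eg <= e / (2 * (Rabs Fp + 1))) by apply Rmin_r.
    assert (HGq : Rabs Gq <= Rabs Gp + 1).
    { replace Gq with (Gp + (Gq - Gp)) by ring. eapply Rle_trans; [apply Rabs_triang|]. lra. }
    assert (T1 : Rabs (Fq - Fp) * Rabs Gq <= ef * (Rabs Gp + 1)).
    { apply Rmult_le_compat; try apply Rabs_pos; lra. }
    assert (T1' : ef * (Rabs Gp + 1) = e / 2) by (unfold ef; field; lra).
    assert (T2 : Rabs Fp * Rabs (Gq - Gp) <= Rabs Fp * eg).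
    { apply Rmult_le_compat_l; lra. }
    assert (T3 : Rabs Fp * eg < e / 2).
    { apply Rle_lt_trans with (Rabs Fp * (e / (2 * (Rabs Fp + 1)))).
      - apply Rmult_le_compat_l; lra.
      - replace (Rabs Fp * (e / (2 * (Rabs Fp + 1)))) with ((e/2) * (Rabs Fp / (Rabs Fp + 1))) by (field; lra).
        assert (Rabs Fp / (Rabs Fp + 1) < 1).
        { apply (Rmult_lt_reg_r (Rabs Fp + 1)); [lra|]. unfold Rdiv; rewrite Rmult_assoc, Rinv_l; lra. }
        nra. }
    lra.
Qed.

Lemma persist f p : 0 < peval f p -> exists eta, 0 < eta /\ forall q, close eta q p -> 0 < peval f q.
Proof.
  intro H. destruct (peval_cont f p (peval f p) H) as [eta [He Hq]].
  exists eta; split; auto. intros q Hc. specialize (Hq q Hc).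
  apply Rabs_def2 in Hq. lra.
Qed.

Definition V (i j k : bool) := PVar i j k.
Definition Pneg (f : poly8) := PMul (PConst (-1)) f.
Definition Psub (f g : poly8) := PAdd f (Pneg g).
Definition PD10 := Psub (PMul (V false false false) (V false true true)) (PMul (V false false true) (V false true false)).
Definition PD11 := Psub (PMul (V true false false) (V true true true)) (PMul (V true false true) (V true true false)).
Definition PD20 := Psub (PMul (V false false false) (V true false true)) (PMul (V false false true) (V true false false)).
Definition PD21 := Psub (PMul (V false true false) (V true true true)) (PMul (V false true true) (V true true false)).
Definition PD30 := Psub (PMul (V false false false) (V true true false)) (PMul (V false true false) (V true false false)).
Definition PD31 := Psub (PMul (V false false true) (V true true true)) (PMul (V false true true) (V true false true)).
Lemma ev_PD10 q : peval PD10 q = d10 q. Proof. unfold d10; simpl; ring. Qed.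
Lemma ev_PD11 q : peval PD11 q = d11 q. Proof. unfold d11; simpl; ring. Qed.
Lemma ev_PD20 q : peval PD20 q = d20 q. Proof. unfold d20; simpl; ring. Qed.
Lemma ev_PD21 q : peval PD21 q = d21 q. Proof. unfold d21; simpl; ring. Qed.
Lemma ev_PD30 q : peval PD30 q = d30 q. Proof. unfold d30; simpl; ring. Qed.
Lemma ev_PD31 q : peval PD31 q = d31 q. Proof. unfold d31; simpl; ring. Qed.
Lemma ev_neg f q : peval (Pneg f) q = - peval f q. Proof. simpl; ring. Qed.

Lemma persist_pos_expr (E : tensor -> R) f p : (forall q, peval f q = E q) -> 0 < E p ->
  exists eta, 0 < eta /\ forall q, close eta q p -> 0 < E q.
Proof.
  intros HE H. rewrite <- HE in H. destruct (persist f p H) as [eta [He Hq]].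
  exists eta; split; auto. intros q Hc; rewrite <- HE; auto.
Qed.

Lemma persist_neg_expr (E : tensor -> R) f p : (forall q, peval f q = E q) -> E p < 0 ->
  exists eta, 0 < eta /\ forall q, close eta q p -> E q < 0.
Proof.
  intros HE H. destruct (persist_pos_expr (fun q => - E q) (Pneg f) p) as [eta [He Hq]].
  - intro q; rewrite ev_neg, HE; reflexivity.
  - lra.
  - exists eta; split; auto. intros q Hc; specialize (Hq q Hc); simpl in Hq; lra.
Qed.

Lemma close_min e1 e2 q p : close (Rmin e1 e2) q p -> close e1 q p /\ close e2 q p.
Proof.
  intro H; split; intros i j k; specialize (H i j k);
  [pose proof (Rmin_l e1 e2) | pose proof (Rmin_r e1 e2)]; lra.
Qed.

Lemma part1 p : bdM p ->
  d10 p = 0 \/ d11 p = 0 \/ d20 p = 0 \/ d21 p = 0 \/ d30 p = 0 \/ d31 p = 0.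
Proof.
  intros [HD Hb].
  destruct (Req_dec (d10 p) 0); [tauto|]. destruct (Req_dec (d11 p) 0); [tauto|].
  destruct (Req_dec (d20 p) 0); [tauto|]. destruct (Req_dec (d21 p) 0); [tauto|].
  destruct (Req_dec (d30 p) 0); [tauto|]. destruct (Req_dec (d31 p) 0); [tauto|].
  exfalso.
  assert (E1 : forall q, peval (PMul PD10 PD11) q = d10 q * d11 q) by (intro q; change (peval PD10 q * peval PD11 q = d10 q * d11 q); rewrite ev_PD10, ev_PD11; reflexivity).
  assert (E2 : forall q, peval (PMul PD20 PD21) q = d20 q * d21 q) by (intro q; change (peval PD20 q * peval PD21 q = d20 q * d21 q); rewrite ev_PD20, ev_PD21; reflexivity).
  assert (E3 : forall q, peval (PMul PD30 PD31) q = d30 q * d31 q) by (intro q; change (peval PD30 q * peval PD31 q = d30 q * d31 q); rewrite ev_PD30, ev_PD31; reflexivity).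
  assert (N1 : d10 p * d11 p <> 0) by (intro Z; apply Rmult_integral in Z; tauto).
  assert (N2 : d20 p * d21 p <> 0) by (intro Z; apply Rmult_integral in Z; tauto).
  assert (N3 : d30 p * d31 p <> 0) by (intro Z; apply Rmult_integral in Z; tauto).
  destruct (Rlt_or_le 0 (d10 p * d11 p)) as [P1|P1].
  { destruct (persist_pos_expr _ _ p E1 P1) as [eta [He Hq]].
    destruct (Hb eta He) as [_ [q [HqD [HqM Hc]]]]. apply HqM, cons1; [exact HqD | exact (Hq q Hc)]. }
  destruct (Rlt_or_le 0 (d20 p * d21 p)) as [P2|P2].
  { destruct (persist_pos_expr _ _ p E2 P2) as [eta [He Hq]].
    destruct (Hb eta He) as [_ [q [HqD [HqM Hc]]]]. apply HqM, cons2; [exact HqD | exact (Hq q Hc)]. }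
  destruct (Rlt_or_le 0 (d30 p * d31 p)) as [P3|P3].
  { destruct (persist_pos_expr _ _ p E3 P3) as [eta [He Hq]].
    destruct (Hb eta He) as [_ [q [HqD [HqM Hc]]]]. apply HqM, cons3; [exact HqD | exact (Hq q Hc)]. }
  destruct (persist_neg_expr _ _ p E1 ltac:(destruct P1; auto; contradiction)) as [e1 [He1 Hq1]].
  destruct (persist_neg_expr _ _ p E2 ltac:(destruct P2; auto; contradiction)) as [e2 [He2 Hq2]].
  destruct (persist_neg_expr _ _ p E3 ltac:(destruct P3; auto; contradiction)) as [e3 [He3 Hq3]].
  destruct (Hb (Rmin e1 (Rmin e2 e3)) ltac:(repeat apply Rmin_pos; auto)) as [[q [HqM Hc]] _].
  apply close_min in Hc as [Hc1 Hc]. apply close_min in Hc as [Hc2 Hc3].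
  apply (Obs q HqM). split; [|split]; auto.
Qed.

Fixpoint ev (l : list R) (t : R) : R := match l with nil => 0 | c :: l' => c + t * ev l' t end.
Fixpoint ladd (l1 l2 : list R) : list R :=
  match l1, l2 with nil, _ => l2 | _, nil => l1 | a :: l1', b :: l2' => (a + b) :: ladd l1' l2' end.
Lemma ev_ladd l1 l2 t : ev (ladd l1 l2) t = ev l1 t + ev l2 t.
Proof. revert l2; induction l1 as [|a l1 IH]; intros [|b l2]; simpl; try ring. rewrite IH; ring. Qed.
Definition lscale (c : R) (l : list R) := map (fun x => c * x) l.
Lemma ev_lscale c l t : ev (lscale c l) t = c * ev l t.
Proof. induction l as [|a l IH]; simpl; [ring|]. rewrite IH; ring. Qed.
Fixpoint lmul (l1 l2 : list R) : list R :=
  match l1 with nil => nil | a :: l1' => ladd (lscale a l2) (0 :: lmul l1' l2) end.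
Lemma ev_lmul l1 l2 t : ev (lmul l1 l2) t = ev l1 t * ev l2 t.
Proof. induction l1 as [|a l1 IH]; simpl; [ring|]. rewrite ev_ladd, ev_lscale; simpl; rewrite IH; ring. Qed.

Definition IsP (h : R -> R) : Prop := exists l, forall t, h t = ev l t.
Lemma IsP_const c : IsP (fun _ => c).
Proof. exists (c :: nil); intro t; simpl; ring. Qed.
Lemma IsP_id : IsP (fun s => s).
Proof. exists (0 :: 1 :: nil); intro t; simpl; ring. Qed.
Lemma IsP_add F G : IsP F -> IsP G -> IsP (fun s => F s + G s).
Proof. intros [l1 H1] [l2 H2]; exists (ladd l1 l2); intro t; rewrite ev_ladd, H1, H2; auto. Qed.
Lemma IsP_mul F G : IsP F -> IsP G -> IsP (fun s => F s * G s).
Proof. intros [l1 H1] [l2 H2]; exists (lmul l1 l2); intro t; rewrite ev_lmul, H1, H2; auto. Qed.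
Lemma IsP_sub F G : IsP F -> IsP G -> IsP (fun s => F s - G s).
Proof.
  intros HF HG. destruct (IsP_add F (fun s => (-1) * G s) HF (IsP_mul _ _ (IsP_const (-1)) HG)) as [l H].
  exists l; intro t; rewrite <- H; ring.
Qed.

Lemma IsP_opp F : IsP F -> IsP (fun s => - F s).
Proof.
  intros HF. destruct (IsP_mul _ F (IsP_const (-1)) HF) as [l H].
  exists l; intro t; rewrite <- H; ring.
Qed.

Fixpoint sumabs (l : list R) : R := match l with nil => 0 | c :: l' => Rabs c + sumabs l' end.
Lemma sumabs_pos l : 0 <= sumabs l.
Proof. induction l; simpl; [lra|]. pose proof (Rabs_pos a); lra. Qed.
Lemma ev_bound l t : Rabs t <= 1 -> Rabs (ev l t) <= sumabs l.
Proof.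
  intro Ht. induction l as [|c l IH]; simpl.
  - rewrite Rabs_R0; lra.
  - eapply Rle_trans; [apply Rabs_triang|]. rewrite Rabs_mult.
    apply Rplus_le_compat_l. pose proof (Rabs_pos t); pose proof (Rabs_pos (ev l t)).
    pose proof (sumabs_pos l). nra.
Qed.

Lemma ev_vanish l r : 0 < r -> (forall s, 0 < s < r -> ev l s = 0) -> forall s, ev l s = 0.
Proof.
  intros Hr. induction l as [|c l IH]; intros H s; simpl; [reflexivity|].
  assert (Hc : c = 0).
  { destruct (Req_dec c 0) as [E|E]; auto. exfalso.
    set (B := sumabs l). assert (HB : 0 <= B) by apply sumabs_pos.
    assert (Hca : 0 < Rabs c) by (apply Rabs_pos_lt; auto).
    set (s0 := Rmin (r/2) (Rmin (1/2) (Rabs c / (2 * (B + 1))))).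
    assert (H1 : s0 <= r/2) by apply Rmin_l.
    assert (H2 : s0 <= 1/2) by (eapply Rle_trans; [apply Rmin_r|apply Rmin_l]).
    assert (H3 : s0 <= Rabs c / (2 * (B + 1))) by (eapply Rle_trans; [apply Rmin_r|apply Rmin_r]).
    assert (H4 : 0 < s0).
    { unfold s0; repeat apply Rmin_pos; try lra. apply Rdiv_lt_0_compat; lra. }
    specialize (H s0 ltac:(lra)). simpl in H.
    assert (Hb : Rabs (ev l s0) <= B) by (apply ev_bound; rewrite Rabs_right; lra).
    assert (Ec : c = - (s0 * ev l s0)) by lra.
    assert (Ea : Rabs c = s0 * Rabs (ev l s0)) by (rewrite Ec, Rabs_Ropp, Rabs_mult, (Rabs_right s0); lra).
    assert (s0 * Rabs (ev l s0) <= s0 * B) by (apply Rmult_le_compat_l; lra).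
    assert (s0 * B <= Rabs c / (2 * (B+1)) * B) by (apply Rmult_le_compat_r; lra).
    assert (Rabs c / (2 * (B + 1)) * B < Rabs c).
    { replace (Rabs c / (2 * (B + 1)) * B) with (Rabs c * (B / (2 * (B+1)))) by (field; lra).
      assert (B / (2 * (B+1)) < 1).
      { apply (Rmult_lt_reg_r (2 * (B+1))); [lra|]. unfold Rdiv; rewrite Rmult_assoc, Rinv_l; lra. }
      nra. }
    lra. }
  subst c. rewrite IH; [ring|].
  intros s1 Hs1. specialize (H s1 Hs1). simpl in H.
  assert (s1 <> 0) by lra.
  apply (Rmult_eq_reg_l s1); auto. lra.
Qed.

Lemma extend (g : R -> R) (y0 r : R) : 0 < r -> IsP (fun s => g (y0 + s)) ->
  (forall y, y0 < y < y0 + r -> g y = 0) -> forall y, g y = 0.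
Proof.
  intros Hr [l Hl] H y.
  assert (V : forall s, ev l s = 0).
  { apply (ev_vanish l r Hr). intros s Hs. rewrite <- Hl. apply H. lra. }
  replace y with (y0 + (y - y0)) by ring. rewrite Hl. apply V.
Qed.

Lemma IsP_peval (T : R -> tensor) : (forall i j k, IsP (fun s => T s i j k)) ->
  forall f, IsP (fun s => peval f (T s)).
Proof.
  intros HT f. induction f; simpl.
  - apply HT.
  - apply IsP_const.
  - apply IsP_add; auto.
  - apply IsP_mul; auto.
Qed.

Definition phi (a b c d z1 z2 z3 : R) : tensor := fun i j k =>
  match i, j, k with
  | false, false, false => a * c | false, false, true => a * d
  | false, true, false => b * c | false, true, true => b * d
  | true, false, false => z1 | true, false, true => z2 | true, true, false => z3
  | true, true, true => 1 - (a * c + a * d + b * c + b * d + z1 + z2 + z3)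
  end.

Ltac isp := repeat first [ apply IsP_const | apply IsP_id | apply IsP_sub | apply IsP_add | apply IsP_opp | apply IsP_mul ].
Ltac isp_coord := intros i j k; destruct i, j, k; simpl; isp.

Lemma peval_ext f p q : (forall i j k, p i j k = q i j k) -> peval f p = peval f q.
Proof. intro E; induction f; simpl; try rewrite IHf1, IHf2; auto. Qed.

Lemma phi_zero f (a0 b0 c0 d0 w1 w2 w3 r : R) : 0 < r ->
  (forall a b c d z1 z2 z3, a0 < a < a0 + r -> b0 < b < b0 + r -> c0 < c < c0 + r ->
     d0 < d < d0 + r -> w1 < z1 < w1 + r -> w2 < z2 < w2 + r -> w3 < z3 < w3 + r ->
     peval f (phi a b c d z1 z2 z3) = 0) ->
  forall a b c d z1 z2 z3, peval f (phi a b c d z1 z2 z3) = 0.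
Proof.
  intros Hr H0.
  assert (S1 : forall a b c d z1 z2 z3, b0 < b < b0 + r -> c0 < c < c0 + r ->
     d0 < d < d0 + r -> w1 < z1 < w1 + r -> w2 < z2 < w2 + r -> w3 < z3 < w3 + r ->
     peval f (phi a b c d z1 z2 z3) = 0).
  { intros a b c d z1 z2 z3 Hb Hc Hd H1 H2 H3.
    apply (extend (fun a => peval f (phi a b c d z1 z2 z3)) a0 r Hr).
    - apply (IsP_peval (fun s => phi (a0 + s) b c d z1 z2 z3)); isp_coord.
    - intros y Hy; apply H0; auto. }
  assert (S2 : forall a b c d z1 z2 z3, c0 < c < c0 + r ->
     d0 < d < d0 + r -> w1 < z1 < w1 + r -> w2 < z2 < w2 + r -> w3 < z3 < w3 + r ->
     peval f (phi a b c d z1 z2 z3) = 0).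
  { intros a b c d z1 z2 z3 Hc Hd H1 H2 H3.
    apply (extend (fun b => peval f (phi a b c d z1 z2 z3)) b0 r Hr).
    - apply (IsP_peval (fun s => phi a (b0 + s) c d z1 z2 z3)); isp_coord.
    - intros y Hy; apply S1; auto. }
  assert (S3 : forall a b c d z1 z2 z3,
     d0 < d < d0 + r -> w1 < z1 < w1 + r -> w2 < z2 < w2 + r -> w3 < z3 < w3 + r ->
     peval f (phi a b c d z1 z2 z3) = 0).
  { intros a b c d z1 z2 z3 Hd H1 H2 H3.
    apply (extend (fun c => peval f (phi a b c d z1 z2 z3)) c0 r Hr).
    - apply (IsP_peval (fun s => phi a b (c0 + s) d z1 z2 z3)); isp_coord.
    - intros y Hy; apply S2; auto. }
  assert (S4 : forall a b c d z1 z2 z3,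
     w1 < z1 < w1 + r -> w2 < z2 < w2 + r -> w3 < z3 < w3 + r ->
     peval f (phi a b c d z1 z2 z3) = 0).
  { intros a b c d z1 z2 z3 H1 H2 H3.
    apply (extend (fun d => peval f (phi a b c d z1 z2 z3)) d0 r Hr).
    - apply (IsP_peval (fun s => phi a b c (d0 + s) z1 z2 z3)); isp_coord.
    - intros y Hy; apply S3; auto. }
  assert (S5 : forall a b c d z1 z2 z3,
     w2 < z2 < w2 + r -> w3 < z3 < w3 + r -> peval f (phi a b c d z1 z2 z3) = 0).
  { intros a b c d z1 z2 z3 H2 H3.
    apply (extend (fun z1 => peval f (phi a b c d z1 z2 z3)) w1 r Hr).
    - apply (IsP_peval (fun s => phi a b c d (w1 + s) z2 z3)); isp_coord.
    - intros y Hy; apply S4; auto. }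
  assert (S6 : forall a b c d z1 z2 z3,
     w3 < z3 < w3 + r -> peval f (phi a b c d z1 z2 z3) = 0).
  { intros a b c d z1 z2 z3 H3.
    apply (extend (fun z2 => peval f (phi a b c d z1 z2 z3)) w2 r Hr).
    - apply (IsP_peval (fun s => phi a b c d z1 (w2 + s) z3)); isp_coord.
    - intros y Hy; apply S5; auto. }
  intros a b c d z1 z2 z3.
  apply (extend (fun z3 => peval f (phi a b c d z1 z2 z3)) w3 r Hr).
  - apply (IsP_peval (fun s => phi a b c d z1 z2 (w3 + s))); isp_coord.
  - intros y Hy; apply S6; auto.
Qed.

Lemma phi_surj x : tsum x = 1 -> d10 x = 0 ->
  exists a b c d, forall i j k,
    phi a b c d (x true false false) (x true false true) (x true true false) i j k = x i j k.
Proof.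
  intros HS HD. unfold d10, tsum in *.
  destruct (Req_dec (x false false false) 0) as [E0|E0].
  - destruct (Req_dec (x false false true) 0) as [E1|E1].
    + exists 0, 1, (x false true false), (x false true true).
      intros i j k; destruct i, j, k; simpl; lra.
    + assert (E2 : x false true false = 0).
      { rewrite E0 in HD. assert (x false false true * x false true false = 0) by lra.
        apply Rmult_integral in H; tauto. }
      assert (K : x false true true / x false false true * x false false true = x false true true) by (field; auto).
      exists 1, (x false true true / x false false true), 0, (x false false true).
      intros i j k; destruct i, j, k; simpl; lra.
  - assert (K1 : x false true false / x false false false * x false false false = x false true false) by (field; auto).
    assert (K2 : x false true false / x false false false * x false false true = x false true true).
    { replace (x false true false / x false false false * x false false true) with
        ((x false false true * x false true false) / x false false false) by (field; auto).
      replace (x false false true * x false true false) with (x false false false * x false true true) by lra.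
      field; auto. }
    exists 1, (x false true false / x false false false), (x false false false), (x false false true).
    intros i j k; destruct i, j, k; simpl; lra.
Qed.

Definition good (q : tensor) : Prop :=
  (forall i j k, 0 < q i j k) /\ d11 q < 0 /\ d20 q * d21 q < 0 /\ d30 q * d31 q < 0.

Definition ctr := phi (1/11) (1/11) 1 1 (1/11) (2/11) (3/11).

Lemma good_ctr_open : exists eta, 0 < eta /\ forall q, close eta q ctr -> good q.
Proof.
  assert (E1 : forall q, peval PD11 q = d11 q) by apply ev_PD11.
  assert (E2 : forall q, peval (PMul PD20 PD21) q = d20 q * d21 q)
    by (intro q; change (peval PD20 q * peval PD21 q = d20 q * d21 q); rewrite ev_PD20, ev_PD21; reflexivity).
  assert (E3 : forall q, peval (PMul PD30 PD31) q = d30 q * d31 q)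
    by (intro q; change (peval PD30 q * peval PD31 q = d30 q * d31 q); rewrite ev_PD30, ev_PD31; reflexivity).
  destruct (persist_neg_expr _ _ ctr E1 ltac:(unfold d11, ctr, phi; simpl; lra)) as [e1 [He1 H1]].
  destruct (persist_neg_expr _ _ ctr E2 ltac:(unfold d20, d21, ctr, phi; simpl; lra)) as [e2 [He2 H2]].
  destruct (persist_neg_expr _ _ ctr E3 ltac:(unfold d30, d31, ctr, phi; simpl; lra)) as [e3 [He3 H3]].
  exists (Rmin (1/11) (Rmin e1 (Rmin e2 e3))). split; [repeat apply Rmin_pos; lra|].
  intros q Hq. apply close_min in Hq as [H0 Hq]. apply close_min in Hq as [Hq1 Hq].
  apply close_min in Hq as [Hq2 Hq3].
  split; [|split; [|split]]; auto.
  intros i j k. specialize (H0 i j k). apply Rabs_def2 in H0.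
  destruct i, j, k; unfold ctr, phi in H0; simpl in H0; lra.
Qed.

Lemma prod_close x y x0 y0 r : Rabs (x - x0) < r -> Rabs (y - y0) < r -> Rabs x0 <= 1 -> Rabs y0 <= 1 ->
  r <= 1 -> Rabs (x * y - x0 * y0) < 3 * r.
Proof.
  intros Hx Hy Hx0 Hy0 Hr.
  replace (x * y - x0 * y0) with ((x - x0) * (y - y0) + (x0 * (y - y0) + y0 * (x - x0))) by ring.
  eapply Rle_lt_trans; [apply Rabs_triang|].
  eapply Rle_lt_trans; [apply Rplus_le_compat_l, Rabs_triang|].
  rewrite !Rabs_mult.
  pose proof (Rabs_pos (x - x0)); pose proof (Rabs_pos (y - y0)); pose proof (Rabs_pos x0); pose proof (Rabs_pos y0).
  assert (Rabs (x - x0) * Rabs (y - y0) < r * 1) by (apply Rmult_le_0_lt_compat; lra).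
  assert (Rabs x0 * Rabs (y - y0) <= 1 * r) by (apply Rmult_le_compat; lra).
  assert (Rabs y0 * Rabs (x - x0) <= 1 * r) by (apply Rmult_le_compat; lra).
  lra.
Qed.

Lemma phi_close a b c d z1 z2 z3 r :
  0 < r -> r <= 1 ->
  1/11 < a < 1/11 + r -> 1/11 < b < 1/11 + r -> 1 < c < 1 + r -> 1 < d < 1 + r ->
  1/11 < z1 < 1/11 + r -> 2/11 < z2 < 2/11 + r -> 3/11 < z3 < 3/11 + r ->
  close (16 * r) (phi a b c d z1 z2 z3) ctr.
Proof.
  intros Hr Hr1 Ha Hb Hc Hd H1 H2 H3.
  assert (R1 : forall u u0, u0 < u < u0 + r -> Rabs (u - u0) < r)
    by (intros u u0 Hu; rewrite Rabs_right; lra).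
  assert (A1 : Rabs (1/11) <= 1) by (rewrite Rabs_right; lra).
  assert (A2 : Rabs 1 <= 1) by (rewrite Rabs_right; lra).
  pose proof (prod_close a c (1/11) 1 r (R1 _ _ Ha) (R1 _ _ Hc) A1 A2 Hr1) as Pac.
  pose proof (prod_close a d (1/11) 1 r (R1 _ _ Ha) (R1 _ _ Hd) A1 A2 Hr1) as Pad.
  pose proof (prod_close b c (1/11) 1 r (R1 _ _ Hb) (R1 _ _ Hc) A1 A2 Hr1) as Pbc.
  pose proof (prod_close b d (1/11) 1 r (R1 _ _ Hb) (R1 _ _ Hd) A1 A2 Hr1) as Pbd.
  apply Rabs_def2 in Pac, Pad, Pbc, Pbd.
  intros i j k; destruct i, j, k; unfold ctr, phi; simpl; apply Rabs_def1; lra.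
Qed.

Definition pert (p : tensor) (dl : R) : tensor := fun i j k =>
  match i, j, k with
  | false, true, true => p false true true + dl
  | true, true, true => p true true true - dl
  | _, _, _ => p i j k end.

Lemma close_trans e1 e2 q p r : close e1 q p -> close e2 p r -> close (e1 + e2) q r.
Proof.
  intros H1 H2 i j k. specialize (H1 i j k); specialize (H2 i j k).
  replace (q i j k - r i j k) with ((q i j k - p i j k) + (p i j k - r i j k)) by ring.
  eapply Rle_lt_trans; [apply Rabs_triang|]. lra.
Qed.

Lemma pert_close p dl e : Rabs dl < e -> close e (pert p dl) p.
Proof.
  intros H i j k; destruct i, j, k; unfold pert; simpl;
  match goal with |- Rabs ?x < e => first [replace x with dl by ring | replace x with (- dl) by ring | replace x with 0 by ring] end;
  rewrite ?Rabs_Ropp; auto; rewrite Rabs_R0; pose proof (Rabs_pos dl); lra.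
Qed.

Lemma box_bdM : exists r, 0 < r /\ forall a b c d z1 z2 z3,
  1/11 < a < 1/11 + r -> 1/11 < b < 1/11 + r -> 1 < c < 1 + r -> 1 < d < 1 + r ->
  1/11 < z1 < 1/11 + r -> 2/11 < z2 < 2/11 + r -> 3/11 < z3 < 3/11 + r ->
  bdM (phi a b c d z1 z2 z3).
Proof.
  destruct good_ctr_open as [eta [He Hg]].
  exists (Rmin 1 (eta / 32)). split; [apply Rmin_pos; lra|].
  intros a b c d z1 z2 z3 Ha Hb Hc Hd H1 H2 H3.
  set (r := Rmin 1 (eta / 32)) in *.
  assert (Hr : 0 < r) by (apply Rmin_pos; lra).
  assert (Hr1 : r <= 1) by apply Rmin_l. assert (Hr2 : r <= eta / 32) by apply Rmin_r.
  pose proof (phi_close a b c d z1 z2 z3 r Hr Hr1 Ha Hb Hc Hd H1 H2 H3) as Pc.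
  set (p := phi a b c d z1 z2 z3) in *.
  assert (Pc' : close (eta / 2) p ctr) by (intros i j k; specialize (Pc i j k); lra).
  assert (Gn : forall q, close (eta / 2) q p -> good q).
  { intros q Hq. apply Hg. replace eta with (eta / 2 + eta / 2) by field.
    apply (close_trans _ _ q p ctr Hq Pc'). }
  assert (Gp : good p) by (apply Gn; intros i j k; rewrite Rminus_diag, Rabs_R0; lra).
  assert (Sp : tsum p = 1) by (unfold tsum, p, phi; simpl; ring).
  assert (D0 : d10 p = 0) by (unfold d10, p, phi; simpl; ring).
  split.
  - split; [intros i j k; apply Rlt_le, Gp | exact Sp].
  - intros eps Heps.
    set (dl := Rmin eps (eta / 2) / 2).
    assert (Hdl : 0 < dl) by (unfold dl; apply Rdiv_lt_0_compat; [apply Rmin_pos|]; lra).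
    assert (Hd1 : dl < eps) by (unfold dl; pose proof (Rmin_l eps (eta/2)); lra).
    assert (Hd2 : dl < eta / 2) by (unfold dl; pose proof (Rmin_r eps (eta/2)); lra).
    assert (Cm : forall s, s = dl \/ s = - dl -> close eps (pert p s) p /\ close (eta / 2) (pert p s) p).
    { intros s Hs; split; apply pert_close; destruct Hs; subst; rewrite ?Rabs_Ropp, Rabs_right; lra. }
    assert (Tq : forall s, tsum (pert p s) = 1) by (intro s; rewrite <- Sp; unfold tsum, pert; simpl; ring).
    assert (Dq : forall s, d10 (pert p s) = s * p false false false).
    { intro s. unfold d10 in *; unfold pert; simpl. lra. }
    split.
    + exists (pert p (- dl)). destruct (Cm (- dl) (or_intror eq_refl)) as [C1 C2]. split; [|exact C1].
      destruct (Gn _ C2) as [Hpos [G1 [G2 G3]]].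
      apply cons1; [split; [intros i j k; apply Rlt_le, Hpos | apply Tq]|].
      rewrite Dq. pose proof (Gp) as [Hp0 _]. specialize (Hp0 false false false).
      assert (- dl * p false false false < 0) by nra. nra.
    + exists (pert p dl). destruct (Cm dl (or_introl eq_refl)) as [C1 C2].
      destruct (Gn _ C2) as [Hpos [G1 [G2 G3]]].
      split; [split; [intros i j k; apply Rlt_le, Hpos | apply Tq]|]. split; [|exact C1].
      intro HM. apply (Obs _ HM). split; [|split]; auto.
      rewrite Dq. pose proof (Gp) as [Hp0 _]. specialize (Hp0 false false false).
      assert (0 < dl * p false false false) by nra. nra.
Qed.

Lemma Z10 f : (forall y, bdM y -> peval f y = 0) -> forall x, tsum x = 1 /\ d10 x = 0 -> peval f x = 0.
Proof.
  intros Hf x [HS HD].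
  destruct box_bdM as [r [Hr Hb]].
  pose proof (phi_zero f (1/11) (1/11) 1 1 (1/11) (2/11) (3/11) r Hr
     (fun a b c d z1 z2 z3 Ha Hb' Hc Hd H1 H2 H3 => Hf _ (Hb a b c d z1 z2 z3 Ha Hb' Hc Hd H1 H2 H3))) as Z.
  destruct (phi_surj x HS HD) as [a [b [c [d E]]]].
  rewrite <- (peval_ext f _ _ E). apply Z.
Qed.

Fixpoint psub (s : bool -> bool -> bool -> poly8) (f : poly8) : poly8 :=
  match f with
  | PVar i j k => s i j k
  | PConst c => PConst c
  | PAdd f g => PAdd (psub s f) (psub s g)
  | PMul f g => PMul (psub s f) (psub s g)
  end.
Lemma peval_psub s f y : peval (psub s f) y = peval f (fun i j k => peval (s i j k) y).
Proof. induction f; simpl; try rewrite IHf1, IHf2; auto. Qed.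

Lemma bdM_sym (sg : tensor -> tensor) :
  (forall p, M33 p -> M33 (sg p)) -> (forall p, Delta7 p -> Delta7 (sg p)) ->
  (forall p i j k, sg (sg p) i j k = p i j k) ->
  (forall e q p, close e q p -> close e (sg q) (sg p)) ->
  forall p, bdM p -> bdM (sg p).
Proof.
  intros HM HD Hinv Hc p [Hp Hb]. split; [auto|].
  intros eps He. destruct (Hb eps He) as [[q1 [M1 C1]] [q2 [D2 [M2 C2]]]]. split.
  - exists (sg q1). split; auto. apply (Hc _ _ _ C1).
  - exists (sg q2). split; [auto|split]. 
    + intro M. apply M2. apply (M33_ext (sg (sg q2))); auto.
    + apply (Hc _ _ _ C2).
Qed.

Lemma Ztrans (sg : tensor -> tensor) (s : bool -> bool -> bool -> poly8) (P Q : tensor -> Prop) :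
  (forall y i j k, peval (s i j k) y = sg y i j k) -> (forall y, bdM y -> bdM (sg y)) ->
  (forall y i j k, sg (sg y) i j k = y i j k) -> (forall x, Q x -> P (sg x)) ->
  (forall f, (forall y, bdM y -> peval f y = 0) -> forall x, P x -> peval f x = 0) ->
  forall f, (forall y, bdM y -> peval f y = 0) -> forall x, Q x -> peval f x = 0.
Proof.
  intros Hs HB Hinv HPQ HP f Hf x Hx.
  assert (E : forall y, peval (psub s f) y = peval f (sg y)).
  { intro y. rewrite peval_psub. apply peval_ext. intros; apply Hs. }
  assert (V : forall y, bdM y -> peval (psub s f) y = 0) by (intros y Hy; rewrite E; apply Hf, HB, Hy).
  specialize (HP _ V (sg x) (HPQ x Hx)). rewrite E in HP.
  rewrite <- HP. apply peval_ext. intros; symmetry; apply Hinv.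
Qed.

Lemma close_perm (sg : tensor -> tensor) (r : bool -> bool -> bool -> bool * bool * bool) :
  (forall y i j k, sg y i j k = let '(a, b, c) := r i j k in y a b c) ->
  forall e q p, close e q p -> close e (sg q) (sg p).
Proof. intros H e q p C i j k. rewrite !H. destruct (r i j k) as [[a b] c]. apply C. Qed.

Lemma bdM_sw12 : forall p, bdM p -> bdM (sw12 p).
Proof.
  apply bdM_sym; [apply M33_sw12 | apply Delta7_sw12 | intros; reflexivity |].
  apply (close_perm _ (fun i j k => (j, i, k))); intros; reflexivity.
Qed.
Lemma bdM_sw13 : forall p, bdM p -> bdM (sw13 p).
Proof.
  apply bdM_sym; [apply M33_sw13 | apply Delta7_sw13 | intros; reflexivity |].
  apply (close_perm _ (fun i j k => (k, j, i))); intros; reflexivity.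
Qed.
Lemma bdM_fl1 : forall p, bdM p -> bdM (fl1 p).
Proof.
  apply bdM_sym; [apply M33_fl1 | apply Delta7_fl1 | intros; unfold fl1; rewrite negb_involutive; reflexivity |].
  apply (close_perm _ (fun i j k => (negb i, j, k))); intros; reflexivity.
Qed.

Definition Pd (D : tensor -> R) (x : tensor) : Prop := tsum x = 1 /\ D x = 0.

Lemma Z11 : forall f, (forall y, bdM y -> peval f y = 0) -> forall x, Pd d11 x -> peval f x = 0.
Proof.
  apply (Ztrans fl1 (fun i j k => PVar (negb i) j k) (Pd d10)); auto using bdM_fl1.
  - intros; unfold fl1; rewrite negb_involutive; reflexivity.
  - intros x [H1 H2]; split; [unfold tsum, fl1 in *; simpl; lra | unfold d10, d11, fl1 in *; simpl; lra].
  - exact Z10.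
Qed.
Lemma Z20 : forall f, (forall y, bdM y -> peval f y = 0) -> forall x, Pd d20 x -> peval f x = 0.
Proof.
  apply (Ztrans sw12 (fun i j k => PVar j i k) (Pd d10)); auto using bdM_sw12.
  - intros x [H1 H2]; split; [unfold tsum, sw12 in *; simpl; lra | unfold d10, d20, sw12 in *; simpl; lra].
  - exact Z10.
Qed.
Lemma Z21 : forall f, (forall y, bdM y -> peval f y = 0) -> forall x, Pd d21 x -> peval f x = 0.
Proof.
  apply (Ztrans sw12 (fun i j k => PVar j i k) (Pd d11)); auto using bdM_sw12.
  - intros x [H1 H2]; split; [unfold tsum, sw12 in *; simpl; lra | unfold d11, d21, sw12 in *; simpl; lra].
  - exact Z11.
Qed.
Lemma Z30 : forall f, (forall y, bdM y -> peval f y = 0) -> forall x, Pd d30 x -> peval f x = 0.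
Proof.
  apply (Ztrans sw13 (fun i j k => PVar k j i) (Pd d10)); auto using bdM_sw13.
  - intros x [H1 H2]; split; [unfold tsum, sw13 in *; simpl; lra | unfold d10, d30, sw13 in *; simpl; lra].
  - exact Z10.
Qed.
Lemma Z31 : forall f, (forall y, bdM y -> peval f y = 0) -> forall x, Pd d31 x -> peval f x = 0.
Proof.
  apply (Ztrans sw13 (fun i j k => PVar k j i) (Pd d11)); auto using bdM_sw13.
  - intros x [H1 H2]; split; [unfold tsum, sw13 in *; simpl; lra | unfold d11, d31, sw13 in *; simpl; lra].
  - exact Z11.
Qed.

Definition Ptsum : poly8 :=
  PAdd (PAdd (PAdd (PAdd (PAdd (PAdd (PAdd (V false false false) (V false false true)) (V false true false))
    (V false true true)) (V true false false)) (V true false true)) (V true true false)) (V true true true).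
Lemma ev_Ptsum y : peval Ptsum y = tsum y. Proof. reflexivity. Qed.
Definition Pprod : poly8 := PMul PD10 (PMul PD11 (PMul PD20 (PMul PD21 (PMul PD30 PD31)))).
Lemma ev_Pprod y : peval Pprod y = d10 y * (d11 y * (d20 y * (d21 y * (d30 y * d31 y)))).
Proof.
  change (peval PD10 y * (peval PD11 y * (peval PD20 y * (peval PD21 y * (peval PD30 y * peval PD31 y)))) =
          d10 y * (d11 y * (d20 y * (d21 y * (d30 y * d31 y))))).
  rewrite ev_PD10, ev_PD11, ev_PD20, ev_PD21, ev_PD30, ev_PD31. reflexivity.
Qed.

Theorem mainTheorem12 :
  (forall p : tensor, bdM p ->
     d10 p = 0 \/ d11 p = 0 \/ d20 p = 0 \/ d21 p = 0 \/ d30 p = 0 \/ d31 p = 0) /\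
  (forall x : tensor, zariski_closure bdM x <->
     (tsum x = 1 /\
      (d10 x = 0 \/ d11 x = 0 \/ d20 x = 0 \/ d21 x = 0 \/ d30 x = 0 \/ d31 x = 0))).
Proof.
  split; [exact part1|].
  intro x; split.
  - intro Hz. split.
    + assert (H := Hz (PAdd Ptsum (PConst (-1)))).
      assert (E : forall y, peval (PAdd Ptsum (PConst (-1))) y = tsum y + -1) by reflexivity.
      rewrite E in H. cut (tsum x + -1 = 0); [lra|]. apply H.
      intros y [[_ Hs] _]. rewrite E, Hs. ring.
    + assert (H := Hz Pprod). rewrite ev_Pprod in H.
      assert (H0 : d10 x * (d11 x * (d20 x * (d21 x * (d30 x * d31 x)))) = 0).
      { apply H. intros y Hy. rewrite ev_Pprod.
        destruct (part1 y Hy) as [E|[E|[E|[E|[E|E]]]]]; rewrite E; ring. }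
      repeat (apply Rmult_integral in H0; destruct H0 as [H0|H0]; [tauto|]). tauto.
  - intros [HS Hd] f Hf.
    destruct Hd as [E|[E|[E|[E|[E|E]]]]].
    + exact (Z10 f Hf x (conj HS E)).
    + exact (Z11 f Hf x (conj HS E)).
    + exact (Z20 f Hf x (conj HS E)).
    + exact (Z21 f Hf x (conj HS E)).
    + exact (Z30 f Hf x (conj HS E)).
    + exact (Z31 f Hf x (conj HS E)).
Qed.
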